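(* The Shapley–Shubik index satisfies the weak subadditivity blocker postulate but not the strong one. That is: (a) For every SVG $\mathcal{G}$ on $N$ and every bloc $I\subseteq N$ all of whose members are YES-blockers, or all of whose members are NO-blockers, we have $\widehat{SS}_I\le \sum_{k\in I} SS_k(\mathcal{G})$. (b) There exist an SVG $\mathcal{G}$ and a bloc $I$ containing a YES-blocker with $\widehat{SS}_I> \sum_{k\in I} SS_k(\mathcal{G})$.
   Context: A simple voting game (SVG) is a pair $\mathcal{G}=(N,\mathcal{W})$ with $N$ a nonempty finite set of $n$ players and $\mathcal{W}\subseteq 2^N$ (the winning sets) such that: - $\mathcal{W}$ is monotone: $S\in\mathcal{W}$ and $S\subseteq T$ imply $T\in\mathcal{W}$; - $\emptyset\notin\mathcal{W}$ and $N\in\mathcal{W}$. A division is an ordered pair $(S,N\setminus S)$ with $S\subseteq N$, where $S$ is the set of YES-voters. Player $k$ is YES-decisive in $(S,N\setminus S)$ if $k\in S\in\mathcal{W}$ and $S\setminus\{k\}\notin\mathcal{W}$. The Shapley–Shubik index is $$SS_k=\sum_{S\subseteq N:\ k\text{ YES-decisive in }S}\frac{(|S|-1)!\,(n-|S|)!}{n!}.$$ Equivalently, $SS_k$ is the fraction of orderings of $N$ in which $k$ is pivotal, i.e. is the first player whose addition to its predecessors makes the set winning. Blockers: a player $b$ is a YES-blocker if $b\in S$ for all $S\in\mathcal{W}$, and a NO-blocker if $b\notin S$ for all $S\notin\mathcal{W}$. Bloc game: for a bloc $I\subseteq N$ with a lead member $i\in I$, the bloc game $\hat{\mathcal{G}}$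 has player set $(N\setminus I)\cup\{i\}$ and winning sets $$\{S\cup\{i\}: S\subseteq N\setminus I,\ S\cup I\in\mathcal{W}\}\cup\{S: S\subseteq N\setminus I,\ S\in\mathcal{W}\}.$$ $\widehat{SS}_I$ is the index of $i$ in $\hat{\mathcal{G}}$. *)

(* Defs.v *)
From mathcomp Require Import all_boot all_order all_algebra.
Set Implicit Arguments. Unset Strict Implicit. Unset Printing Implicit Defensive.
Import Order.TTheory GRing.Theory Num.Theory.

Section SVG.
Variable T : finType.

Definition svg (N : {set T}) (W : {set {set T}}) : Prop :=
  [/\ N != set0,
      (forall S : {set T}, S \in W -> S \subset N),
      (forall S S' : {set T}, S \in W -> S \subset S' -> S' \subset N -> S' \in W),
      set0 \notin W &
      N \in W].

Definition yes_decisive (W : {set {set T}}) (k : T) (S : {set T}) : bool :=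
  [&& k \in S, S \in W & S :\ k \notin W].

Definition SS (N : {set T}) (W : {set {set T}}) (k : T) : rat :=
  \sum_(S in powerset N | yes_decisive W k S)
     (((#|S|.-1)`! * (#|N| - #|S|)`!)%:R / (#|N|`!)%:R)%R.

Definition yes_blocker (N : {set T}) (W : {set {set T}}) (b : T) : Prop :=
  b \in N /\ forall S : {set T}, S \in W -> b \in S.

Definition no_blocker (N : {set T}) (W : {set {set T}}) (b : T) : Prop :=
  b \in N /\ forall S : {set T}, S \subset N -> S \notin W -> b \notin S.

Definition bloc_players (N I : {set T}) (i : T) : {set T} :=
  (N :\: I) :|: [set i].

Definition bloc_W (N : {set T}) (W : {set {set T}}) (I : {set T}) (i : T)
  : {set {set T}} :=
  [set S in powerset (bloc_players N I i) |
     if i \in S then (S :\ i) :|: I \in W else S \in W].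

Definition SS_bloc (N : {set T}) (W : {set {set T}}) (I : {set T}) (i : T) : rat :=
  SS (bloc_players N I i) (bloc_W N W I i) i.

End SVG.

(* Main.v *)
Require Import Defs.
From mathcomp Require Import all_boot all_order all_algebra.
From mathcomp Require Import ring zify lra.
Set Implicit Arguments. Unset Strict Implicit. Unset Printing Implicit Defensive.
Import Order.TTheory GRing.Theory Num.Theory.

Definition A (p r z : nat) : rat :=
  ((p.+1 * (z+p)`! * (r-z)`!)%:R / ((r+p.+1)`!)%:R)%R.
Definition c1n (p r y z : nat) : rat :=
  ((p.+1 * (y+p)`! * (z-y)`! * (r-z)`!)%:R / ((r+p.+2)`!)%:R)%R.
Definition c2n (p r y : nat) : rat :=
  ((p.+1 * (y+p.+1)`! * (r-y)`!)%:R / ((r+p.+2)`!)%:R)%R.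

Lemma hockey z p : \sum_(k < z.+1) 'C(k+p, k) = 'C(z+p.+1, z).
Proof.
elim: z => [|z IH]; first by rewrite big_ord_recr big_ord0 /= !bin0.
rewrite big_ord_recr /= IH -addSnnS [in RHS]addSn binS addnC.
by rewrite addSnnS.
Qed.

Lemma hockey2 z p :
  p.+1 * \sum_(k < z.+1) ('C(z,k) * (k+p)`! * (z-k)`!) = (z+p.+1)`!.
Proof.
have E : forall k : 'I_z.+1,
  'C(z,k) * (k+p)`! * (z-k)`! = z`! * p`! * 'C(k+p,k).
  move=> k.
  have Hk : (k <= z)%N by rewrite -ltnS ltn_ord.
  have H1 := bin_fact Hk.
  have H2 : 'C(k+p, k) * (k`! * (k+p-k)`!) = (k+p)`! by rewrite bin_fact // leq_addr.
  rewrite addKn in H2.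
  rewrite -H1 -H2; ring.
rewrite (eq_bigr _ (fun k _ => E k)) -big_distrr /= hockey.
have := bin_fact (leq_addr p.+1 z).
rewrite addKn => <-.
rewrite factS; ring.
Qed.

Lemma frac_eq (x y u v : nat) : (0 < y)%N -> (0 < v)%N -> x * v = u * y ->
  (x%:R / y%:R : rat)%R = (u%:R / v%:R)%R.
Proof.
move=> y0 v0 H; apply/eqP; rewrite eqr_div ?pnatr_eq0 -?lt0n // -!natrM.
by rewrite H.
Qed.

Lemma N1 p r y L : y + L = r ->
  (\sum_(k < L.+1) 'C(L,k)%:R * c1n p r y (y+k) + c2n p r y = A p r y)%R.
Proof.
move=> HL.
have E : forall k : 'I_L.+1, ('C(L,k)%:R * c1n p r y (y+k) =
   (p.+1 * (y+p)`! * L`!)%:R / ((r+p.+2)`!)%:R :> rat)%R.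
  move=> k; rewrite /c1n mulrA -natrM; congr (_%:R / _)%R.
  have Hk : (k <= L)%N by rewrite -ltnS ltn_ord.
  rewrite addKn -HL subnDl -(bin_fact Hk); ring.
rewrite (eq_bigr _ (fun k _ => E k)) -mulr_suml -natr_sum sum_nat_const card_ord.
rewrite /c2n -mulrDl -natrD /A -HL addKn.
apply: frac_eq; rewrite ?fact_gt0 //.
rewrite !addnS !factS; ring.
Qed.

Lemma N2 p r z :
  (\sum_(k < z.+1) 'C(z,k)%:R * c1n p r k z + c2n p r z = A p.+1 r z)%R.
Proof.
have E : forall k : 'I_z.+1, ('C(z,k)%:R * c1n p r k z =
   ('C(z,k) * (k+p)`! * (z-k)`! * (p.+1 * (r-z)`!))%:R / ((r+p.+2)`!)%:R :> rat)%R.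
  move=> k; rewrite /c1n mulrA -natrM; congr (_%:R / _)%R; ring.
rewrite (eq_bigr _ (fun k _ => E k)) -mulr_suml -natr_sum -big_distrl /=.
rewrite /c2n -mulrDl -natrD /A.
congr (_%:R / _)%R.
set S := (\sum_(k < z.+1) _).
have H := hockey2 z p. rewrite -/S in H.
rewrite -H; ring.
Qed.

Local Open Scope ring_scope.
Section Sets.
Variable T : finType.

Lemma sum_sub (B : {set T}) (h : nat -> rat) :
  \sum_(Y : {set T} | Y \subset B) h #|Y| = \sum_(k < #|B|.+1) ('C(#|B|,k))%:R * h k.
Proof.
have E : forall Y : {set T}, Y \subset B ->
    h #|Y| = \sum_(k < #|B|.+1) (if #|Y| == k then h k else 0).
  move=> Y sYB.
  have lt : (#|Y| < #|B|.+1)%N by rewrite ltnS subset_leq_card.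
  rewrite -big_mkcond /= (big_pred1 (Ordinal lt)) //.
rewrite (eq_bigr _ E) exchange_big /=.
apply: eq_bigr => k _.
rewrite -big_mkcondr /=.
rewrite (eq_bigl (fun Y => Y \in [set Y : {set T} | Y \subset B & #|Y| == k])); last first.
  by move=> Y; rewrite inE.
by rewrite sumr_const cards_draws mulr_natl.
Qed.

Lemma sum_sup (R Y : {set T}) (h : nat -> rat) : Y \subset R ->
  \sum_(Z : {set T} | (Z \subset R) && (Y \subset Z)) h #|Z|
  = \sum_(X : {set T} | X \subset R :\: Y) h (#|Y| + #|X|).
Proof.
move=> sYR.
have inj : {in powerset (R :\: Y) &, injective (fun X => X :|: Y)}.
  move=> X1 X2; rewrite !powersetE => s1 s2 E.
  apply/setP => x; have := congr1 (fun S : {set T} => x \in S) E; rewrite /= !inE.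
  case: (boolP (x \in Y)) => xY; last by rewrite !orbF.
  have -> : (x \in X1) = false.
    by apply/negP => /(subsetP s1); rewrite inE xY.
  suff -> : (x \in X2) = false by [].
  by apply/negP => /(subsetP s2); rewrite inE xY.
rewrite [RHS](eq_bigl (fun X => X \in powerset (R :\: Y))); last by move=> X; rewrite powersetE.
have cardE : forall X, X \in powerset (R :\: Y) -> #|Y| + #|X| = #|X :|: Y|.
  move=> X; rewrite powersetE => sX.
  rewrite cardsU.
  have -> : X :&: Y = set0.
    apply/setP => x; rewrite !inE; apply/negP => /andP [xX xY].
    by have := subsetP sX x xX; rewrite inE xY.
  by rewrite cards0 subn0 addnC.
rewrite [RHS](eq_bigr (fun X => h #|X :|: Y|)); last by move=> X HX; rewrite cardE.
rewrite -(big_imset (fun S : {set T} => h #|S|) inj) /=.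
apply: eq_bigl => Z.
apply/andP/imsetP.
  move=> [sZR sYZ]; exists (Z :\: Y).
    by rewrite powersetE; apply: setSD.
  apply/setP => x; rewrite !inE; case xY: (x \in Y) => /=; rewrite ?orbT ?orbF //.
  by rewrite (subsetP sYZ x xY).
move=> [X]; rewrite powersetE => sX ->.
split; last by apply: subsetUr.
rewrite subUset sYR andbT; apply: subset_trans sX _; apply: subsetDl.
Qed.

Lemma step (R : {set T}) (F : {set {set T}}) (p : nat) :
  (forall X : {set T}, X \in F -> X \subset R) ->
  (forall X Y : {set T}, X \in F -> X \subset Y -> Y \subset R -> Y \in F) ->
  \sum_(X in F) A p #|R| #|X| <= \sum_(X in F) A p.+1 #|R| #|X|.
Proof.
move=> sub up; set r := #|R|.
have id1 : forall Y : {set T}, Y \subset R -> A p r #|Y| =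
   \sum_(Z : {set T} | (Z \subset R) && (Y \subset Z)) c1n p r #|Y| #|Z| + c2n p r #|Y|.
  move=> Y sY; rewrite (sum_sup (fun z => c1n p r #|Y| z) sY).
  rewrite (sum_sub _ (fun k => c1n p r #|Y| (#|Y| + k))).
  have cd : #|R :\: Y| = (r - #|Y|)%N by rewrite cardsD (setIidPr sY).
  rewrite cd; apply/esym/N1; rewrite subnKC //; exact: subset_leq_card.
have id2 : forall Z : {set T}, Z \subset R -> A p.+1 r #|Z| =
   \sum_(Y : {set T} | Y \subset Z) c1n p r #|Y| #|Z| + c2n p r #|Z|.
  by move=> Z sZ; rewrite (sum_sub _ (fun k => c1n p r k #|Z|)) N2.
rewrite (eq_bigr _ (fun X HX => id1 X (sub X HX))).
rewrite [X in _ <= X](eq_bigr _ (fun X HX => id2 X (sub X HX))).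
rewrite !big_split /= lerD2r.
have L1 : \sum_(X in F) \sum_(Z : {set T} | (Z \subset R) && (X \subset Z)) c1n p r #|X| #|Z|
   = \sum_(X : {set T}) \sum_(Z : {set T})
      (if (X \in F) && ((Z \subset R) && (X \subset Z)) then c1n p r #|X| #|Z| else 0).
  rewrite big_mkcond; apply: eq_bigr => X _; case: (X \in F) => /=.
    by rewrite big_mkcond.
  by rewrite big1.
have L2 : \sum_(Z in F) \sum_(Y : {set T} | Y \subset Z) c1n p r #|Y| #|Z|
   = \sum_(X : {set T}) \sum_(Z : {set T})
      (if (Z \in F) && (X \subset Z) then c1n p r #|X| #|Z| else 0).
  rewrite exchange_big /= big_mkcond; apply: eq_bigr => Z _; case: (Z \in F) => /=.
    by rewrite big_mkcond.
  by rewrite big1.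
rewrite L1 L2; apply: ler_sum => X _; apply: ler_sum => Z _.
case HX: (X \in F) => /=; case HZ: (Z \in F) => /=.
- case: (X \subset Z); rewrite ?andbT ?andbF //; case: (Z \subset R) => //; by rewrite divr_ge0 ?ler0n.
- case: (boolP (Z \subset R)) => //= sZ; case: (boolP (X \subset Z)) => //= sXZ.
  by rewrite (up X Z HX sXZ sZ) in HZ.
- by case: (_ \subset _) => //; rewrite divr_ge0 ?ler0n.
- by [].
Qed.

Lemma core (R : {set T}) (F : {set {set T}}) (p : nat) :
  (forall X : {set T}, X \in F -> X \subset R) ->
  (forall X Y : {set T}, X \in F -> X \subset Y -> Y \subset R -> Y \in F) ->
  \sum_(X in F) A 0 #|R| #|X| <= \sum_(X in F) A p #|R| #|X|.
Proof.
move=> sub up; elim: p => [|p IH] //.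
by apply: le_trans IH (step p sub up).
Qed.

Definition w (n s : nat) : rat := ((s.-1)`! * (n - s)`!)%:R / (n`!)%:R.

Lemma reidx (P : pred {set T}) (D : {set {set T}}) (f : {set T} -> {set T})
  (g : {set T} -> rat) :
  {in D &, injective f} -> (forall S, P S = (S \in f @: D)) ->
  \sum_(S | P S) g S = \sum_(X in D) g (f X).
Proof. by move=> inj E; rewrite (eq_bigl _ _ E) big_imset. Qed.

Lemma inj_U1 (a : T) (R : {set T}) (D : {set {set T}}) : a \notin R ->
  (forall X : {set T}, X \in D -> X \subset R) -> {in D &, injective (fun X => a |: X)}.
Proof.
move=> aR sub X1 X2 H1 H2 E.
have n1 : a \notin X1 by apply: contra aR; exact: (subsetP (sub _ H1)).
have n2 : a \notin X2 by apply: contra aR; exact: (subsetP (sub _ H2)).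
by rewrite -(setU1K n1) -(setU1K n2) /= E.
Qed.

Lemma card_U1 (a : T) (X : {set T}) : a \notin X -> #|a |: X| = #|X|.+1.
Proof. by move=> aX; rewrite cardsU1 aX. Qed.

Lemma bloc_card (N I : {set T}) (i : T) : i \in I ->
  #|bloc_players N I i| = #|N :\: I|.+1.
Proof.
move=> iI; rewrite /bloc_players setUC card_U1 //.
by rewrite inE iI.
Qed.

Lemma yes_case (N : {set T}) (W : {set {set T}}) (I : {set T}) (i : T) :
  svg N W -> I \subset N -> i \in I ->
  (forall k, k \in I -> yes_blocker N W k) ->
  SS_bloc N W I i <= \sum_(k in I) SS N W k.
Proof.
move=> [N0 WsubN mono W0 NW] sI iI yb.
set R := N :\: I.
set F := [set X in powerset R | X :|: I \in W].
have Fsub : forall X : {set T}, X \in F -> X \subset R.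
  by move=> X; rewrite inE ?powersetE => /andP [].
have RN : R \subset N by apply: subsetDl.
have Fup : forall X Y : {set T}, X \in F -> X \subset Y -> Y \subset R -> Y \in F.
  move=> X Y; rewrite /F !inE ?powersetE => /andP [_ XW] sXY sYR.
  rewrite sYR /=; apply: (mono _ _ XW); first exact: setSU.
  by rewrite subUset sI andbT (subset_trans sYR RN).
have iR : i \notin R by rewrite inE iI.
have m0 : (0 < #|I|)%N by apply/card_gt0P; exists i.
set p := (#|I|).-1.
have mp : #|I| = p.+1 by rewrite /p prednK.
have nE : #|N| = (#|R| + p.+1)%N.
  rewrite /R cardsD (setIidPr sI) -mp subnK //; exact: subset_leq_card.
have Hb : SS_bloc N W I i = \sum_(X in F) A 0 #|R| #|X|.
  rewrite /SS_bloc /SS [LHS](reidx (D:=F) (f := fun X => i |: X)).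
  - apply: eq_bigr => X HX.
    have iX : i \notin X by apply: contra iR; exact: (subsetP (Fsub X HX) i).
    rewrite bloc_card // card_U1 // /A subSS /= mul1n addn0 addn1 //.
  - exact: inj_U1 iR Fsub.
  move=> S; apply/idP/imsetP.
    move=> /andP [SM /and3P [iS SB nSB]].
    move: SB; rewrite /bloc_W inE iS => /andP [_ H].
    exists (S :\ i); last by rewrite setD1K.
    rewrite inE ?powersetE H andbT.
    apply/subsetP => x; rewrite inE => /andP [xi xS].
    move: SM; rewrite ?powersetE => SM; have := subsetP SM x xS.
    move: xi; rewrite /bloc_players !inE => /negbTE ->; by rewrite orbF.
  case=> X; rewrite inE ?powersetE => /andP [sXR XIW] ->.
  have iX : i \notin X by apply: contra iR; exact: (subsetP sXR i).
  have SM : (i |: X) \in powerset (bloc_players N I i).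
    rewrite ?powersetE /bloc_players; apply/subsetP => x; rewrite !inE.
    case/orP => [->|xX]; rewrite ?orbT //.
    by move: (subsetP sXR x xX); rewrite /R inE => ->.
  apply/andP; split; first by move: SM; rewrite ?powersetE.
  rewrite /yes_decisive; apply/and3P; split.
  - by rewrite setU11.
  - by rewrite /bloc_W inE SM setU11 (setU1K iX).
  - rewrite /bloc_W inE (setU1K iX) (negbTE iX) negb_and; apply/orP; right.
    by apply/negP => XW; have := (yb i iI).2 X XW; rewrite (negbTE iX).
have Hs : \sum_(k in I) SS N W k = \sum_(X in F) A p #|R| #|X|.
  transitivity (\sum_(k in I) \sum_(X in F) w #|N| (#|X| + p.+1)).
    apply: eq_bigr => k kI; rewrite /SS [LHS](reidx (D:=F) (f := fun X => X :|: I)).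
    - apply: eq_bigr => X HX.
      have -> : #|X :|: I| = (#|X| + p.+1)%N.
        rewrite cardsU -mp.
        have -> : X :&: I = set0.
          apply/setP => x; rewrite !inE; apply/negP => /andP [xX xI].
          by have := subsetP (Fsub X HX) x xX; rewrite inE xI.
        by rewrite cards0 subn0.
      by [].
    - move=> X1 X2 H1 H2 /= E.
      have D : forall X, X \in F -> (X :|: I) :\: I = X.
        move=> X HX; apply/setP => x; rewrite !inE.
        case xI: (x \in I) => /=; last by rewrite orbF.
        apply/esym/negP => xX; have := subsetP (Fsub X HX) x xX.
        by rewrite inE xI.
      by rewrite -(D X1 H1) -(D X2 H2) E.
    move=> S; apply/idP/imsetP.
      move=> /andP [_ /and3P [kS SW nSW]].
      have sIS : I \subset S by apply/subsetP => x xI; exact: (yb x xI).2 S SW.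
      have E : (S :\: I) :|: I = S.
        apply/setP => x; rewrite !inE; case xI: (x \in I); rewrite ?orbT ?orbF //=.
        by rewrite (subsetP sIS x xI).
      exists (S :\: I); last by rewrite E.
      rewrite inE ?powersetE E SW andbT; exact: setSD (WsubN S SW).
    case=> X; rewrite inE ?powersetE => /andP [sXR XIW] ->.
    apply/andP; split.
      by rewrite ?powersetE subUset sI andbT (subset_trans sXR RN).
    apply/and3P; split => //; first by rewrite inE kI orbT.
    by apply/negP => H; have := (yb k kI).2 _ H; rewrite !inE eqxx.
  rewrite sumr_const mp -sumrMnl; apply: eq_bigr => X HX.
  rewrite /w /A nE -(mulr_natl (_ / _) p.+1) mulrA -natrM addnS /= addnS subSS subnDr.
  by rewrite mulnA.
rewrite Hb Hs; exact: core Fsub Fup.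
Qed.

Lemma no_case (N : {set T}) (W : {set {set T}}) (I : {set T}) (i : T) :
  svg N W -> I \subset N -> i \in I ->
  (forall k, k \in I -> no_blocker N W k) ->
  SS_bloc N W I i <= \sum_(k in I) SS N W k.
Proof.
move=> [N0 WsubN mono W0 NW] sI iI nb.
have win : forall k (S : {set T}), k \in I -> S \subset N -> k \in S -> S \in W.
  move=> k S kI sSN kS; apply/negPn/negP => nSW.
  by have := (nb k kI).2 S sSN nSW; rewrite kS.
set R := N :\: I.
have RN : R \subset N by apply: subsetDl.
set G := [set Y in powerset R | Y \notin W].
set F := [set Z in powerset R | (R :\: Z) \notin W].
have Gsub : forall Y : {set T}, Y \in G -> Y \subset R.
  by move=> Y; rewrite /G inE ?powersetE => /andP [].
have Fsub : forall X : {set T}, X \in F -> X \subset R.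
  by move=> X; rewrite /F inE ?powersetE => /andP [].
have Fup : forall X Y : {set T}, X \in F -> X \subset Y -> Y \subset R -> Y \in F.
  move=> X Y; rewrite /F !inE ?powersetE => /andP [_ XW] sXY sYR.
  rewrite sYR /=; apply/negP => H; move/negP: XW; apply.
  apply: (mono _ _ H); first exact: setDS.
  exact: subset_trans (subsetDl R X) RN.
have dd : forall Z : {set T}, Z \subset R -> R :\: (R :\: Z) = Z.
  by move=> Z sZ; rewrite setDDr setDv set0U (setIidPr sZ).
have comp : forall g : nat -> rat,
    \sum_(Y in G) g #|Y| = \sum_(Z in F) g (#|R| - #|Z|)%N.
  move=> g; rewrite [LHS](reidx (D:=F) (f := fun Z => R :\: Z)).
  - apply: eq_bigr => Z HZ; by rewrite cardsD (setIidPr (Fsub Z HZ)).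
  - move=> Z1 Z2 H1 H2 /= E.
    by rewrite -(dd Z1 (Fsub Z1 H1)) -(dd Z2 (Fsub Z2 H2)) E.
  move=> Y; apply/idP/imsetP.
    move=> HY; have sY := Gsub Y HY; exists (R :\: Y); last by rewrite dd.
    move: HY; rewrite /G /F !inE ?powersetE dd // subsetDl /=.
    by case/andP.
  case=> Z HZ ->; move: HZ; rewrite /G /F !inE ?powersetE subsetDl /=.
  by case/andP.
have iR : i \notin R by rewrite inE iI.
have m0 : (0 < #|I|)%N by apply/card_gt0P; exists i.
set p := (#|I|).-1.
have mp : #|I| = p.+1 by rewrite /p prednK.
have nE : #|N| = (#|R| + p.+1)%N.
  rewrite /R cardsD (setIidPr sI) -mp subnK //; exact: subset_leq_card.
have Hb : SS_bloc N W I i = \sum_(Y in G) w #|R|.+1 #|Y|.+1.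
  rewrite /SS_bloc /SS [LHS](reidx (D:=G) (f := fun X => i |: X)).
  - apply: eq_bigr => X HX.
    have iX : i \notin X by apply: contra iR; exact: (subsetP (Gsub X HX) i).
    by rewrite bloc_card // card_U1.
  - exact: inj_U1 iR Gsub.
  move=> S; apply/idP/imsetP.
    move=> /andP [SM /and3P [iS SB nSB]].
    have SM' : S \subset bloc_players N I i by move: SM; rewrite ?powersetE.
    exists (S :\ i); last by rewrite setD1K.
    rewrite /G inE ?powersetE; apply/andP; split.
      apply/subsetP => x; rewrite inE => /andP [xi xS].
      have := subsetP SM' x xS.
      move: xi; rewrite /bloc_players !inE => /negbTE ->; by rewrite orbF.
    apply/negP => H; move/negP: nSB; apply.
    rewrite /bloc_W inE ?powersetE (subset_trans (subD1set S i) SM') /=.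
    by rewrite setD11.
  case=> Y; rewrite /G inE ?powersetE => /andP [sYR YW] ->.
  have iY : i \notin Y by apply: contra iR; exact: (subsetP sYR i).
  have SM : (i |: Y) \subset bloc_players N I i.
    rewrite /bloc_players; apply/subsetP => x; rewrite !inE.
    case/orP => [->|xY]; rewrite ?orbT //.
    by move: (subsetP sYR x xY); rewrite /R inE => ->.
  apply/andP; split; first by rewrite ?powersetE.
  rewrite /yes_decisive; apply/and3P; split.
  - by rewrite setU11.
  - rewrite /bloc_W inE ?powersetE SM setU11 (setU1K iY) /=.
    apply: (win i) => //; last by rewrite inE iI orbT.
    by rewrite subUset sI andbT (subset_trans sYR RN).
  - by rewrite /bloc_W inE (setU1K iY) (negbTE iY) (negbTE YW) andbF.
have Hs : \sum_(k in I) SS N W k = (\sum_(Y in G) w #|N| #|Y|.+1) *+ p.+1.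
  rewrite -mp -sumr_const; apply: eq_bigr => k kI.
  have kR : k \notin R by rewrite inE kI.
  rewrite /SS [LHS](reidx (D:=G) (f := fun X => k |: X)).
  - apply: eq_bigr => X HX.
    have kX : k \notin X by apply: contra kR; exact: (subsetP (Gsub X HX) k).
    by rewrite card_U1.
  - exact: inj_U1 kR Gsub.
  move=> S; apply/idP/imsetP.
    move=> /andP [SN /and3P [kS SW nSW]].
    have SN' : S \subset N by move: SN; rewrite ?powersetE.
    exists (S :\ k); last by rewrite setD1K.
    rewrite /G inE ?powersetE nSW andbT.
    apply/subsetP => x xSk.
    have xS : x \in S by move: xSk; rewrite inE => /andP [].
    rewrite /R inE (subsetP SN' x xS) andbT.
    apply/negP => xI; move/negP: nSW; apply.
    apply: (win x) => //.
    exact: subset_trans (subD1set S k) SN'.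
  case=> Y; rewrite /G inE ?powersetE => /andP [sYR YW] ->.
  have kY : k \notin Y by apply: contra kR; exact: (subsetP sYR k).
  have SN : (k |: Y) \subset N.
    apply/subsetP => x; rewrite !inE => /orP [/eqP ->|xY].
      exact: (subsetP sI k kI).
    exact: (subsetP RN x (subsetP sYR x xY)).
  apply/andP; split; first by rewrite ?powersetE.
  rewrite /yes_decisive; apply/and3P; split.
  - by rewrite setU11.
  - by apply: (win k) => //; rewrite setU11.
  - by rewrite (setU1K kY).
rewrite Hb Hs (comp (fun y => w #|R|.+1 y.+1)) (comp (fun y => w #|N| y.+1)) -sumrMnl.
have -> : \sum_(Z in F) w #|R|.+1 (#|R| - #|Z|).+1 = \sum_(Z in F) A 0 #|R| #|Z|.
  apply: eq_bigr => Z HZ; have lz := subset_leq_card (Fsub Z HZ).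
  rewrite /w /A subSS subKn // mul1n addn0 addn1 mulnC //.
have -> : \sum_(Z in F) w #|N| (#|R| - #|Z|).+1 *+ p.+1 = \sum_(Z in F) A p #|R| #|Z|.
  apply: eq_bigr => Z HZ; have lz := subset_leq_card (Fsub Z HZ).
  rewrite /w /A nE -(mulr_natl (_ / _) p.+1) mulrA -natrM /=.
  have -> : (#|R| + p.+1 - (#|R| - #|Z|).+1 = #|Z| + p)%N by lia.
  by congr (_%:R / _); ring.
exact: core Fsub Fup.
Qed.
End Sets.

Lemma sum_powU1 (T : finType) (a : T) (A : {set T}) (g : {set T} -> rat) : a \notin A ->
  \sum_(S in powerset (a |: A)) g S = \sum_(S in powerset A) g S + \sum_(S in powerset A) g (a |: S).
Proof.
move=> aA; rewrite (bigID (fun S : {set T} => a \in S)) /= addrC; congr (_ + _).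
  apply: eq_bigl => S; rewrite !powersetE; apply/andP/idP.
    move=> [sS nS]; apply/subsetP => x xS; move: (subsetP sS x xS); rewrite !inE.
    by case/orP => // /eqP xa; move: nS; rewrite -xa xS.
  move=> sS; split; first by apply: subset_trans sS (subsetUr _ _).
  by apply: contra aA; exact: (subsetP sS a).
rewrite -(big_imset (fun S : {set T} => g S) (h := fun S => a |: S)) /=; last first.
  move=> X1 X2; rewrite !powersetE => H1 H2 E.
  have n1 : a \notin X1 by apply: contra aA; exact: (subsetP H1 a).
  have n2 : a \notin X2 by apply: contra aA; exact: (subsetP H2 a).
  by rewrite -(setU1K n1) -(setU1K n2) E.
apply: eq_bigl => S; apply/andP/imsetP.
  move=> [sS aS]; exists (S :\ a); last by rewrite setD1K.
  rewrite powersetE; apply/subsetP => x; rewrite inE => /andP [xa xS].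
  move: sS; rewrite powersetE => sS.
  by move: xa (subsetP sS x xS); rewrite !inE => /negbTE ->.
case=> X; rewrite powersetE => sX ->; rewrite powersetE setU11; split => //.
by apply/subsetP => x; rewrite !inE => /orP [->|xX]; rewrite ?(subsetP sX x xX) ?orbT.
Qed.

Lemma sum_pow0 (T : finType) (g : {set T} -> rat) :
  \sum_(S in powerset (set0 : {set T})) g S = g set0.
Proof.
rewrite (eq_bigl (fun S => S \in [set set0])) ?big_set1 // => S.
by rewrite powersetE subset0 inE.
Qed.

Definition o0 : 'I_3 := Ordinal (isT : (0 < 3)%N).
Definition o1 : 'I_3 := Ordinal (isT : (1 < 3)%N).
Definition o2 : 'I_3 := Ordinal (isT : (2 < 3)%N).
Definition N3 : {set 'I_3} := o0 |: (o1 |: (o2 |: set0)).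
Definition W3 : {set {set 'I_3}} := [set S : {set 'I_3} | (o0 \in S) && ((o1 \in S) || (o2 \in S))].
Definition I3 : {set 'I_3} := o0 |: (o1 |: set0).

Lemma ex : (\sum_(k in I3) SS N3 W3 k < SS_bloc N3 W3 I3 o0)%R.
Proof.
rewrite /SS_bloc /SS.
have BP : bloc_players N3 I3 o0 = o0 |: (o2 |: set0).
  apply/setP => x; rewrite /bloc_players !inE; case: x => [[|[|[|]]]] //.
have s1 : o0 |: set0 \subset o0 |: (o2 |: set0).
  by apply/subsetP => x; rewrite !inE => /orP [->|].
have s2 : o0 |: (o2 |: set0) \subset o0 |: (o2 |: set0) by [].
rewrite BP.
rewrite /I3 !big_setU1 ?inE //= big_set0.
rewrite !big_mkcondr /=.
rewrite !sum_powU1 ?inE // !sum_pow0.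
rewrite /yes_decisive /bloc_W /W3 -/N3 -/I3 BP /N3 !inE /= s1 s2 /=.
rewrite !cardsU1 !inE /= cards0 /= !andbF /=.
rewrite !(addn0, add0n, add1n, subSS, subn0, subnn, factS, fact0, muln1, mul1n).
rewrite !natrM.
lra.
Qed.

Theorem theorem2 :
  (forall (T : finType) (N : {set T}) (W : {set {set T}}) (I : {set T}) (i : T),
     svg N W -> I \subset N -> i \in I ->
     ((forall k, k \in I -> yes_blocker N W k) \/
      (forall k, k \in I -> no_blocker N W k)) ->
     (SS_bloc N W I i <= \sum_(k in I) SS N W k)%R)
  /\
  (exists (n : nat) (N : {set 'I_n}) (W : {set {set 'I_n}}) (I : {set 'I_n}) (i : 'I_n),
     [/\ svg N W, I \subset N, i \in I,
         (exists2 b, b \in I & yes_blocker N W b) &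
         (\sum_(k in I) SS N W k < SS_bloc N W I i)%R]).
Proof.
split.
  move=> T N W I i svgNW sI iI [yb|nb].
    exact: yes_case.
  exact: no_case.
have N3T : N3 = setT.
  by apply/setP => x; rewrite /N3 !inE; case: x => [[|[|[|]]]] //.
exists 3, N3, W3, I3, o0; split.
- split.
  + by apply/set0Pn; exists o0; rewrite /N3 !inE.
  + by move=> S _; rewrite N3T subsetT.
  + move=> S S'; rewrite !inE => /andP [h0 h12] sS _.
    rewrite (subsetP sS _ h0) /=.
    by case/orP: h12 => h; rewrite (subsetP sS _ h) ?orbT.
  + by rewrite inE !in_set0.
  + by rewrite inE /N3 !inE.
- by rewrite N3T subsetT.
- by rewrite /I3 !inE.
- exists o0; first by rewrite /I3 !inE.
  split; first by rewrite N3T in_setT.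
  by move=> S; rewrite inE => /andP [].
- exact: ex.
Qed.
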